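(* Let $SO$ be a semi-overlap function and let $I_{SO}(u,v)=\sup\{w\in[0,1]\mid SO(u,w)\le v\}$ be its residual implication, assumed to be a fuzzy implication. Then: (1) $SO(u,v)=\min\{w\in[0,1]\mid I_{SO}(u,w)\ge v\}$ for all $u,v\in[0,1]$. (2) $I_{SO}$ satisfies (NP) if and only if $1$ is the neutral element of $SO$. (3) $I_{SO}$ satisfies (EP) if and only if $SO$ is associative. (4) $I_{SO}$ satisfies (IP) if and only if $SO(u,1)\le u$ for all $u\in[0,1]$. (5) $I_{SO}$ satisfies (LOP) if and only if $SO(u,1)\le u$ for all $u\in[0,1]$. (6) $I_{SO}$ satisfies (ROP) if and only if $SO(u,1)\ge u$ for all $u\in[0,1]$. (7) $I_{SO}$ satisfies (OP) if and only if $1$ is the neutral element of $SO$. (8) $I_{SO}$ satisfies (CB) if and only if $SO(u,v)\le\min\{u,v\}$ for all $u,v\in[0,1]$. (9) If $I_{SO}$ satisfies (CB), then $I_{SO}$ satisfies (SIB). (10) If $SO(u,v)=\min\{u,v\}$ for all $u,v$, then $I_{SO}$ satisfies (IB). (11) If $SO$ has $1$ as neutral element, then $I_{SO}$ satisfies (CB).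
   Context: A semi-overlap function is a function $SO:[0,1]^2\to[0,1]$ such that for all $u,v\in[0,1]$: (S1) $SO(u,v)=SO(v,u)$; (S2) if $uv=0$ then $SO(u,v)=0$; (S3) if $uv=1$ then $SO(u,v)=1$; (S4) $SO$ is increasing in each variable; (S5) $SO$ is left-continuous, meaning that for every $u\in[0,1]$ and every nonempty family $\{v_i\mid i\in I\}\subseteq[0,1]$, $SO(u,\sup_{i\in I}v_i)=\sup_{i\in I}SO(u,v_i)$. $1$ is the neutral element of $SO$ if $SO(1,v)=v$ for all $v$. A fuzzy implication is a function $I:[0,1]^2\to[0,1]$ such that: $u\le v$ implies $I(v,w)\le I(u,w)$; $v\le w$ implies $I(u,v)\le I(u,w)$; $I(0,0)=1$; $I(1,1)=1$; $I(1,0)=0$. For a fuzzy implication $I$ (all quantifiers over $[0,1]$): (NP) $I(1,v)=v$; (LOP) $u\le v\Rightarrow I(u,v)=1$; (ROP) $I(u,v)=1\Rightarrow u\le v$; (OP) $u\le v\Leftrightarrow I(u,v)=1$; (EP) $I(u,I(v,w))=I(v,I(u,w))$; (IP) $I(u,u)=1$; (CB) $v\le I(u,v)$; (SIB) $I(u,v)\le I(u,I(u,v))$; (IB) $I(u,v)=I(u,I(u,v))$. *)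

(* Defs.v *)
From mathcomp Require Import all_boot all_order all_algebra.
From mathcomp Require Import all_classical all_reals.
Set Implicit Arguments. Unset Strict Implicit. Unset Printing Implicit Defensive.
Import Order.TTheory GRing.Theory Num.Theory.
Local Open Scope ring_scope.
Local Open Scope classical_set_scope.

Section Fuzzy.
Variable R : realType.

Definition in01 (x : R) : Prop := 0 <= x <= 1.

(* A binary operation on [0,1], represented as a function R -> R -> R
   considered only on [0,1]^2. *)
Definition maps01 (F : R -> R -> R) : Prop :=
  forall u v, in01 u -> in01 v -> in01 (F u v).

Definition semi_overlap (SO : R -> R -> R) : Prop :=
  maps01 SO /\
  [/\ (forall u v, in01 u -> in01 v -> SO u v = SO v u),
      (forall u v, in01 u -> in01 v -> u * v = 0 -> SO u v = 0),
      (forall u v, in01 u -> in01 v -> u * v = 1 -> SO u v = 1),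
      (forall u v w, in01 u -> in01 v -> in01 w -> v <= w ->
                  SO u v <= SO u w /\ SO v u <= SO w u) &
      (forall (u : R) (I : Type) (v : I -> R), in01 u ->
                  (exists i : I, True) -> (forall i, in01 (v i)) ->
                  SO u (sup (range v)) = sup (range (fun i => SO u (v i))))].

Definition neutral_one (SO : R -> R -> R) : Prop :=
  forall v, in01 v -> SO 1 v = v.

Definition associative01 (SO : R -> R -> R) : Prop :=
  forall u v w, in01 u -> in01 v -> in01 w -> SO u (SO v w) = SO (SO u v) w.

Definition fuzzy_implication (I : R -> R -> R) : Prop :=
  maps01 I /\
  [/\ (forall u v w, in01 u -> in01 v -> in01 w -> u <= v -> I v w <= I u w),
      (forall u v w, in01 u -> in01 v -> in01 w -> v <= w -> I u v <= I u w),
      I 0 0 = 1, I 1 1 = 1 & I 1 0 = 0].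

Definition residual (SO : R -> R -> R) (u v : R) : R :=
  sup [set w | in01 w /\ SO u w <= v].

Definition NP (I : R -> R -> R) : Prop := forall v, in01 v -> I 1 v = v.
Definition LOP (I : R -> R -> R) : Prop :=
  forall u v, in01 u -> in01 v -> u <= v -> I u v = 1.
Definition ROP (I : R -> R -> R) : Prop :=
  forall u v, in01 u -> in01 v -> I u v = 1 -> u <= v.
Definition OP (I : R -> R -> R) : Prop :=
  forall u v, in01 u -> in01 v -> (u <= v <-> I u v = 1).
Definition EP (I : R -> R -> R) : Prop :=
  forall u v w, in01 u -> in01 v -> in01 w -> I u (I v w) = I v (I u w).
Definition IP (I : R -> R -> R) : Prop := forall u, in01 u -> I u u = 1.
Definition CB (I : R -> R -> R) : Prop :=
  forall u v, in01 u -> in01 v -> v <= I u v.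
Definition SIB (I : R -> R -> R) : Prop :=
  forall u v, in01 u -> in01 v -> I u v <= I u (I u v).
Definition IB (I : R -> R -> R) : Prop :=
  forall u v, in01 u -> in01 v -> I u v = I u (I u v).

End Fuzzy.

(* Main.v *)
Require Import Defs.
From mathcomp Require Import all_boot all_order all_algebra.
From mathcomp Require Import all_classical all_reals.
Import Order.TTheory GRing.Theory Num.Theory.
Local Open Scope ring_scope.
Local Open Scope classical_set_scope.

Lemma res_facts (R : realType) (SO : R -> R -> R) u v :
  semi_overlap SO -> in01 u -> in01 v ->
  in01 (residual SO u v) /\ SO u (residual SO u v) <= v /\
  (forall w, in01 w -> SO u w <= v -> w <= residual SO u v).
Proof.
move=> [Hm [S1 S2 S3 S4 S5]] Hu Hv.
set A := [set w | in01 w /\ SO u w <= v].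
have i0 : in01 (0:R) by rewrite /in01 lexx ler01.
have i1 : in01 (1:R) by rewrite /in01 lexx ler01.
have A0 : A 0.
  split=> //; rewrite S2 ?mulr0 //; by case/andP: Hv.
have ub : ubound A 1 by move=> x [/andP[]].
have hs : has_sup A by split; [exists 0 | exists 1].
have upb : forall w, A w -> w <= residual SO u v.
  by move=> w Aw; exact: (sup_upper_bound hs).
have r01 : in01 (residual SO u v).
  apply/andP; split; first exact: upb.
  by apply: ge_sup => //; exists 0.
split=> //; split; last by move=> w Hw H; apply: upb.
have hr : range (@sval R A) = A.
  apply/seteqP; split=> x.
    by case=> -[y Ay] _ /= <-.
  by move=> Ax; exists (exist _ x Ax).
have := S5 u {w | A w} (@sval R A) Hu (ex_intro _ (exist _ 0 A0) I)
  (fun i => proj1 (svalP i)).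
rewrite hr => ->.
apply: ge_sup.
  by exists (SO u 0); exists (exist _ 0 A0).
by move=> _ [[y [_ Hy]] _ /= <-].
Qed.
Theorem proposition3p10 (R : realType) (SO : R -> R -> R) :
  semi_overlap SO -> fuzzy_implication (residual SO) ->
  (* (1) SO(u,v) = min {w in [0,1] | I_SO(u,w) >= v} *)
  (forall u v, in01 u -> in01 v ->
     [/\ in01 (SO u v), v <= residual SO u (SO u v) &
         forall w, in01 w -> v <= residual SO u w -> SO u v <= w]) /\
  (* (2) *) (NP (residual SO) <-> neutral_one SO) /\
  (* (3) *) (EP (residual SO) <-> associative01 SO) /\
  (* (4) *) (IP (residual SO) <-> forall u, in01 u -> SO u 1 <= u) /\
  (* (5) *) (LOP (residual SO) <-> forall u, in01 u -> SO u 1 <= u) /\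
  (* (6) *) (ROP (residual SO) <-> forall u, in01 u -> u <= SO u 1) /\
  (* (7) *) (OP (residual SO) <-> neutral_one SO) /\
  (* (8) *) (CB (residual SO) <->
             forall u v, in01 u -> in01 v -> SO u v <= Order.min u v) /\
  (* (9) *) (CB (residual SO) -> SIB (residual SO)) /\
  (* (10) *) ((forall u v, in01 u -> in01 v -> SO u v = Order.min u v) ->
              IB (residual SO)) /\
  (* (11) *) (neutral_one SO -> CB (residual SO)).
Proof.
move=> HSO HI; have HSO' := HSO; case: HSO' => Hm [S1 S2 S3 S4 S5].
have i0 : in01 (0:R) by rewrite /in01 lexx ler01.
have i1 : in01 (1:R) by rewrite /in01 lexx ler01.
have le1 : forall x : R, in01 x -> x <= 1 by move=> x /andP[].
have Ri : forall u v, in01 u -> in01 v -> in01 (residual SO u v).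
  by move=> u v Hu Hv; case: (@res_facts R SO u v HSO Hu Hv).
have Rf : forall u v w, in01 u -> in01 v -> in01 w ->
    (SO u w <= v <-> w <= residual SO u v).
  move=> u v w Hu Hv Hw; case: (@res_facts R SO u v HSO Hu Hv) => r01 [Hr Hub].
  split; first exact: Hub.
  move=> Hwr; apply: le_trans Hr; exact: (S4 u w _ Hu Hw r01 Hwr).1.
have eq1 : forall u v, in01 u -> in01 v -> (residual SO u v = 1 <-> SO u 1 <= v).
  move=> u v Hu Hv; split.
    by move=> H; apply/(Rf u v 1 Hu Hv i1); rewrite H.
  move=> /(Rf u v 1 Hu Hv i1) H; apply/eqP; rewrite eq_le H andbT.
  exact: le1 (Ri u v Hu Hv).
have anti : forall a b : R, in01 a -> in01 b ->
    (forall t, in01 t -> t <= a -> t <= b) ->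
    (forall t, in01 t -> t <= b -> t <= a) -> a = b.
  move=> a b Ha Hb H1 H2; apply/eqP; rewrite eq_le (H1 a Ha (lexx a)).
  by rewrite (H2 b Hb (lexx b)).
have swap : forall u v w t, in01 u -> in01 v -> in01 w -> in01 t ->
    (t <= residual SO u (residual SO v w) <-> SO v (SO u t) <= w).
  move=> u v w t Hu Hv Hw Ht.
  rewrite -(Rf u _ t Hu (Ri v w Hv Hw) Ht).
  exact: iff_sym (Rf v w _ Hv Hw (Hm u t Hu Ht)).
have h5 : LOP (residual SO) <-> forall u, in01 u -> SO u 1 <= u.
  split.
    by move=> H u Hu; apply/(eq1 u u Hu Hu); apply: H.
  move=> H u v Hu Hv Huv; apply/(eq1 u v Hu Hv); exact: le_trans (H u Hu) Huv.
have h6 : ROP (residual SO) <-> forall u, in01 u -> u <= SO u 1.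
  split.
    move=> H u Hu; apply: H => //; first exact: Hm.
    by apply/(eq1 u _ Hu (Hm u 1 Hu i1)).
  move=> H u v Hu Hv /(eq1 u v Hu Hv) H1; exact: le_trans (H u Hu) H1.
have h8 : CB (residual SO) <->
    forall u v, in01 u -> in01 v -> SO u v <= Order.min u v.
  split.
    move=> H u v Hu Hv; rewrite le_min; apply/andP; split.
      by rewrite S1 //; apply/(Rf v u u Hv Hu Hu); apply: H.
    by apply/(Rf u v v Hu Hv Hv); apply: H.
  move=> H u v Hu Hv; apply/(Rf u v v Hu Hv Hv).
  by have := H u v Hu Hv; rewrite le_min => /andP[].
split.
  move=> u v Hu Hv; split; first exact: Hm.
    by apply/(Rf u _ v Hu (Hm u v Hu Hv) Hv).
  by move=> w Hw H; apply/(Rf u w v Hu Hw Hv).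
split.
  split.
    move=> H v Hv; apply/eqP; rewrite eq_le; apply/andP; split.
      by apply/(Rf 1 v v i1 Hv Hv); rewrite H.
    have Hs := Hm 1 v i1 Hv.
    by rewrite -[X in _ <= X](H _ Hs); apply/(Rf 1 _ v i1 Hs Hv).
  move=> H v Hv; apply/eqP; rewrite eq_le; apply/andP; split.
    have r01 := Ri 1 v i1 Hv.
    by rewrite -[X in X <= _](H _ r01); apply/(Rf 1 v _ i1 Hv r01).
  by apply/(Rf 1 v v i1 Hv Hv); rewrite H.
split.
  split.
    move=> H.
    have sw : forall u v t, in01 u -> in01 v -> in01 t ->
        SO v (SO u t) = SO u (SO v t).
      move=> u v t Hu Hv Ht.
      have A1 := Hm v _ Hv (Hm u t Hu Ht); have A2 := Hm u _ Hu (Hm v t Hv Ht).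
      apply/eqP; rewrite eq_le; apply/andP; split.
        apply/(swap u v _ t Hu Hv A2 Ht); rewrite H //.
        exact/(swap v u _ t Hv Hu A2 Ht).
      apply/(swap v u _ t Hv Hu A1 Ht); rewrite H //.
      exact/(swap u v _ t Hu Hv A1 Ht).
    move=> u v w Hu Hv Hw.
    rewrite (S1 v w Hv Hw) (sw w u v Hw Hu Hv) S1 //; exact: Hm.
  move=> H u v w Hu Hv Hw.
  apply: (anti _ _ (Ri u _ Hu (Ri v w Hv Hw)) (Ri v _ Hv (Ri u w Hu Hw))).
    move=> t Ht /(swap u v w t Hu Hv Hw Ht) Hle.
    apply/(swap v u w t Hv Hu Hw Ht).
    by rewrite H // (S1 u v) // -H.
  move=> t Ht /(swap v u w t Hv Hu Hw Ht) Hle.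
  apply/(swap u v w t Hu Hv Hw Ht).
  by rewrite H // (S1 v u) // -H.
split.
  split.
    by move=> H u Hu; apply/(eq1 u u Hu Hu); apply: H.
  by move=> H u Hu; apply/(eq1 u u Hu Hu); apply: H.
split; first exact: h5.
split; first exact: h6.
split.
  split.
    move=> H.
    have L : LOP (residual SO) by move=> u v Hu Hv Huv; apply/(H u v Hu Hv).
    have Ro : ROP (residual SO) by move=> u v Hu Hv Huv; apply/(H u v Hu Hv).
    move=> v Hv; rewrite S1 //; apply/eqP; rewrite eq_le.
    by rewrite (proj1 h5 L v Hv) (proj1 h6 Ro v Hv).
  move=> H.
  have e : forall u, in01 u -> SO u 1 = u by move=> u Hu; rewrite S1 // H.
  have L : LOP (residual SO) by apply/h5 => u Hu; rewrite e.
  have Ro : ROP (residual SO) by apply/h6 => u Hu; rewrite e.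
  move=> u v Hu Hv; split; [exact: L | exact: Ro].
split; first exact: h8.
split.
  by move=> H u v Hu Hv; apply: H => //; apply: Ri.
split.
  move=> Hmin.
  have CB1 : CB (residual SO) by apply/h8 => u v Hu Hv; rewrite Hmin.
  move=> u v Hu Hv; set r := residual SO u v.
  have r01 : in01 r := Ri u v Hu Hv.
  apply/eqP; rewrite eq_le CB1 //=.
  set a := residual SO u r.
  have a01 : in01 a := Ri u r Hu r01.
  have H1 : SO u a <= r by apply/(Rf u r a Hu r01 a01).
  have s01 := Hm u a Hu a01.
  have H2 : SO u (SO u a) <= v by apply/(Rf u v _ Hu Hv s01).
  apply/(Rf u v a Hu Hv a01).
  move: H2; rewrite (Hmin u (SO u a)) // (Hmin u a) //.
  by rewrite minA minxx.
move=> H; apply/h8 => u v Hu Hv.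
rewrite le_min; apply/andP; split.
  rewrite -[X in _ <= X](H u Hu) S1 //.
  exact: (S4 u v 1 Hu Hv i1 (le1 v Hv)).2.
rewrite -[X in _ <= X](H v Hv).
exact: (S4 v u 1 Hv Hu i1 (le1 u Hu)).2.
Qed.
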